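(* Let $a\ge0$ and let $\mathfrak g=\mathfrak r'_{3,a}$, the Lie algebra with basis $\{e_1,e_2,e_3\}$ and nonzero brackets $[e_1,e_2]=ae_2-e_3$, $[e_1,e_3]=e_2+ae_3$, identified with $\mathbb R^3$ via this basis. Then $$U=\left\{\begin{pmatrix}1&0&0\\0&1&0\\0&0&1/\lambda\end{pmatrix}:\lambda\ge1\right\}$$ is a set of representatives of $\mathcal{PM}(\mathfrak g)$.
   Context: $\mathcal M(\mathfrak g)$ is the set of inner products on $\mathfrak g\cong\mathbb R^3$, with $\mathrm{GL}_3(\mathbb R)$-action $g.\langle\cdot,\cdot\rangle=\langle g^{-1}\cdot,g^{-1}\cdot\rangle$; $\langle\cdot,\cdot\rangle_0$ makes $\{e_1,e_2,e_3\}$ orthonormal. Two inner products are isometric up to scaling if $\langle\cdot,\cdot\rangle_1=k\langle f\cdot,f\cdot\rangle_2$ for some $k>0$ and Lie algebra automorphism $f$; $[\langle\cdot,\cdot\rangle]$ denotes the equivalence class and $\mathcal{PM}(\mathfrak g)$ the set of classes. A subset $U\subset\mathrm{GL}_3(\mathbb R)$ is a set of representatives of $\mathcal{PM}(\mathfrak g)$ if $\mathcal{PM}(\mathfrak g)=\{[h.\langle\cdot,\cdot\rangle_0]: h\in U\}$. *)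

(* Defs.v *)
From HB Require Import structures.
From mathcomp Require Import all_boot all_order all_algebra.
From mathcomp Require Import reals.
Set Implicit Arguments. Unset Strict Implicit. Unset Printing Implicit Defensive.
Import Order.TTheory GRing.Theory Num.Theory.
Local Open Scope ring_scope.

(* g = R^3 as column vectors, coordinates w.r.t. the basis e1, e2, e3
   (indices 0,1,2). *)
Definition vec (R : realType) := 'cV[R]_3.

(* Lie bracket of r'_{3,a}:  [e1,e2] = a e2 - e3, [e1,e3] = e2 + a e3,
   [e2,e3] = 0, extended bilinearly and antisymmetrically. *)
Definition r3a_bracket (R : realType) (a : R) (x y : vec R) : vec R :=
  let p := x 0 0 * y 1 0 - x 1 0 * y 0 0 in
  let q := x 0 0 * y 2%:R 0 - x 2%:R 0 * y 0 0 in
  \col_(i < 3) (if i == 0 then 0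
                else if i == 1 then a * p + q
                else - p + a * q).

Definition lie_aut (R : realType) (a : R) (f : 'M[R]_3) : Prop :=
  f \in unitmx /\
  forall x y : vec R, f *m r3a_bracket a x y = r3a_bracket a (f *m x) (f *m y).

Definition is_inner_product (R : realType) (B : vec R -> vec R -> R) : Prop :=
  (forall (c : R) x y z, B (c *: x + y) z = c * B x z + B y z) /\
  (forall x y, B x y = B y x) /\
  (forall x, x != 0 -> 0 < B x x).

Definition ip0 (R : realType) (x y : vec R) : R := \sum_(i < 3) x i 0 * y i 0.

Definition gl_act (R : realType) (g : 'M[R]_3) (B : vec R -> vec R -> R)
  : vec R -> vec R -> R :=
  fun x y => B (invmx g *m x) (invmx g *m y).

(* Isometric up to scaling: B1 = k B2(f ., f .) with k > 0, f a Lie algebra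
   automorphism.  [B1] = [B2] in PM(g) iff this holds. *)
Definition isom_up_to_scaling (R : realType) (a : R)
  (B1 B2 : vec R -> vec R -> R) : Prop :=
  exists k : R, 0 < k /\ exists f : 'M[R]_3, lie_aut a f /\
    forall x y, B1 x y = k * B2 (f *m x) (f *m y).

Definition hU (R : realType) (lam : R) : 'M[R]_3 :=
  \matrix_(i < 3, j < 3) (if i == j then (if i == 2%:R then lam^-1 else 1) else 0).

(* U is a set of representatives of PM(g): the set of classes of inner
   products equals {[h.<.,.>_0] : h in U}. *)
Definition set_of_representatives (R : realType) (a : R) (U : 'M[R]_3 -> Prop) : Prop :=
  (forall h, U h -> h \in unitmx /\ is_inner_product (gl_act h (@ip0 R))) /\
  (forall B, is_inner_product B ->
     exists h, U h /\ isom_up_to_scaling a B (gl_act h (@ip0 R))).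

(* Main.v *)
Require Import Defs.
From HB Require Import structures.
From mathcomp Require Import all_boot all_order all_algebra.
From mathcomp Require Import reals.
From mathcomp Require Import ring lra.
Set Implicit Arguments. Unset Strict Implicit. Unset Printing Implicit Defensive.
Import Order.TTheory GRing.Theory Num.Theory.
Local Open Scope ring_scope.

Section B.
Variable R : realType.

Lemma ord3 (i : 'I_3) : i = 0 \/ i = 1 \/ i = 2%:R.
Proof.
case: i => [[|[|[|//]]] Hi].
- by left; apply/val_inj.
- by right; left; apply/val_inj.
- by right; right; apply/val_inj.
Qed.

Lemma sum3 (F : 'I_3 -> R) : \sum_(i < 3) F i = F 0 + F 1 + F 2%:R.
Proof.
rewrite !big_ord_recr big_ord0 /= add0r.
by congr (F _ + F _ + F _); apply/val_inj.
Qed.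

Lemma mul3 (A : 'M[R]_3) (x : 'cV[R]_3) i :
  (A *m x) i 0 = A i 0 * x 0 0 + A i 1 * x 1 0 + A i 2%:R * x 2%:R 0.
Proof. by rewrite mxE sum3. Qed.

Definition col3 (u v w : R) : 'cV[R]_3 :=
  \col_(i < 3) (if i == 0 then u else if i == 1 then v else w).

Lemma col3_0 u v w : col3 u v w 0 0 = u. Proof. by rewrite mxE. Qed.
Lemma col3_1 u v w : col3 u v w 1 0 = v. Proof. by rewrite mxE. Qed.
Lemma col3_2 u v w : col3 u v w 2%:R 0 = w. Proof. by rewrite mxE. Qed.

Lemma col3E (x : 'cV[R]_3) : x = col3 (x 0 0) (x 1 0) (x 2%:R 0).
Proof.
apply/matrixP => i j; rewrite (ord1 j).
by have [->|[->|->]] := ord3 i; rewrite ?col3_0 ?col3_1 ?col3_2.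
Qed.

Definition mk3 (a00 a01 a02 a10 a11 a12 a20 a21 a22 : R) : 'M[R]_3 :=
  \matrix_(i < 3, j < 3)
   (if i == 0 then (if j == 0 then a00 else if j == 1 then a01 else a02)
    else if i == 1 then (if j == 0 then a10 else if j == 1 then a11 else a12)
    else (if j == 0 then a20 else if j == 1 then a21 else a22)).

Lemma mk3E a00 a01 a02 a10 a11 a12 a20 a21 a22 u v w :
  mk3 a00 a01 a02 a10 a11 a12 a20 a21 a22 *m col3 u v w =
  col3 (a00*u + a01*v + a02*w) (a10*u+a11*v+a12*w) (a20*u+a21*v+a22*w).
Proof.
apply/matrixP => i j; rewrite (ord1 j) mul3 !mxE.
by have [->|[->|->]] := ord3 i.
Qed.


Lemma ip0E (u v : 'cV[R]_3) :
  ip0 u v = u 0 0 * v 0 0 + u 1 0 * v 1 0 + u 2%:R 0 * v 2%:R 0.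
Proof. by rewrite /ip0 sum3. Qed.

Lemma bracketE (a : R) x0 x1 x2 y0 y1 y2 :
  r3a_bracket a (col3 x0 x1 x2) (col3 y0 y1 y2) =
  col3 0 (a * (x0 * y1 - x1 * y0) + (x0 * y2 - x2 * y0))
         (- (x0 * y1 - x1 * y0) + a * (x0 * y2 - x2 * y0)).
Proof.
rewrite /r3a_bracket !col3_0 !col3_1 !col3_2.
apply/matrixP => i j; rewrite (ord1 j) !mxE.
by have [->|[->|->]] := ord3 i.
Qed.

Lemma col3_eq u v w u' v' w' : u = u' -> v = v' -> w = w' ->
  col3 u v w = col3 u' v' w'.
Proof. by move=> -> -> ->. Qed.

Definition e0 := col3 1 0 0.
Definition e1 := col3 0 1 0.
Definition e2 := col3 0 0 1.

Lemma ip_zero (B : vec R -> vec R -> R) : is_inner_product B -> forall z, B 0 z = 0.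
Proof.
move=> [hl _] z.
have := hl (-1) 0 0 z; rewrite scaler0 addr0 => h.
by move: h; rewrite mulN1r addNr.
Qed.

Lemma ip_exp1 (B : vec R -> vec R -> R) : is_inner_product B -> forall x z,
  B x z = x 0 0 * B e0 z + x 1 0 * B e1 z + x 2%:R 0 * B e2 z.
Proof.
move=> hB x z; have [hl _] := hB.
have ex : x = x 0 0 *: e0 + (x 1 0 *: e1 + (x 2%:R 0 *: e2 + 0)).
  rewrite [LHS]col3E; apply/matrixP => i j; rewrite (ord1 j) !mxE.
  by have [->|[->|->]] := ord3 i => /=; rewrite ?mulr1 ?mulr0 ?addr0 ?add0r.
rewrite {1}ex.
rewrite hl hl hl (@ip_zero B hB); ring.
Qed.

Lemma ip_exp (B : vec R -> vec R -> R) : is_inner_product B -> forall x y,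
  B x y = x 0 0 * y 0 0 * B e0 e0 + x 1 0 * y 1 0 * B e1 e1
        + x 2%:R 0 * y 2%:R 0 * B e2 e2
        + (x 0 0 * y 1 0 + x 1 0 * y 0 0) * B e0 e1
        + (x 0 0 * y 2%:R 0 + x 2%:R 0 * y 0 0) * B e0 e2
        + (x 1 0 * y 2%:R 0 + x 2%:R 0 * y 1 0) * B e1 e2.
Proof.
move=> hB x y; have [_ [hs _]] := hB.
rewrite (@ip_exp1 B hB x) (hs e0) (hs e1) (hs e2) !(@ip_exp1 B hB y).
rewrite (hs e1 e0) (hs e2 e0) (hs e2 e1); ring.
Qed.


Lemma mk3E' a00 a01 a02 a10 a11 a12 a20 a21 a22 (x : 'cV[R]_3) :
  mk3 a00 a01 a02 a10 a11 a12 a20 a21 a22 *m x =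
  col3 (a00 * x 0 0 + a01 * x 1 0 + a02 * x 2%:R 0)
       (a10 * x 0 0 + a11 * x 1 0 + a12 * x 2%:R 0)
       (a20 * x 0 0 + a21 * x 1 0 + a22 * x 2%:R 0).
Proof. by rewrite {1}(col3E x) mk3E. Qed.

Lemma col3_neq0 u v w : (u != 0) || (v != 0) || (w != 0) -> col3 u v w != 0.
Proof.
move=> h; apply/eqP => e; move: h.
have h0 := congr1 (fun M : 'cV[R]_3 => M 0 0) e.
have h1 := congr1 (fun M : 'cV[R]_3 => M 1 0) e.
have h2 := congr1 (fun M : 'cV[R]_3 => M 2%:R 0) e.
move: h0 h1 h2; rewrite /= col3_0 col3_1 col3_2 !mxE => -> -> ->.
by rewrite !eqxx.
Qed.

Lemma col3_00 : col3 0 0 0 = 0.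
Proof.
apply/matrixP => i j; rewrite !mxE.
by have [->|[->|->]] := ord3 i.
Qed.

Lemma ip0_pos (z : 'cV[R]_3) : z != 0 -> 0 < ip0 z z.
Proof.
move=> hz; rewrite ip0E.
have h0 := sqr_ge0 (z 0 0); have h1 := sqr_ge0 (z 1 0).
have h2 := sqr_ge0 (z 2%:R 0).
have [a0|a0] := eqVneq (z 0 0) 0; have [a1|a1] := eqVneq (z 1 0) 0;
  have [a2|a2] := eqVneq (z 2%:R 0) 0.
- by move: hz; rewrite (col3E z) a0 a1 a2 col3_00 eqxx.
all: rewrite -!expr2.
all: first [ have : 0 < z 2%:R 0 ^+ 2 by rewrite lt0r sqrf_eq0 a2 sqr_ge0
           | have : 0 < z 1 0 ^+ 2 by rewrite lt0r sqrf_eq0 a1 sqr_ge0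
           | have : 0 < z 0 0 ^+ 2 by rewrite lt0r sqrf_eq0 a0 sqr_ge0 ]; lra.
Qed.

Lemma hU_inv (lam : R) : lam != 0 ->
  hU lam \in unitmx /\ invmx (hU lam) = mk3 1 0 0 0 1 0 0 0 lam.
Proof.
move=> hl.
have h : hU lam *m mk3 1 0 0 0 1 0 0 0 lam = 1%:M.
  apply/matrixP => i j; rewrite mxE sum3 !mxE.
  by have [->|[->|->]] := ord3 i; have [->|[->|->]] := ord3 j => /=;
    rewrite ?mulr0 ?mul0r ?mulr1 ?addr0 ?add0r ?mulVf.
have [hu _] := mulmx1_unit h.
split => //.
by rewrite -[RHS]mul1mx -(mulVmx hu) -mulmxA h mulmx1.
Qed.

Lemma F_aut (a al be v2 v3 : R) : al ^+ 2 + be ^+ 2 != 0 ->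
  lie_aut a (mk3 1 0 0 v2 al be v3 (- be) al).
Proof.
move=> hs; split.
  set s := al ^+ 2 + be ^+ 2.
  have h : mk3 1 0 0 v2 al be v3 (- be) al *m
    mk3 1 0 0 (- (al * v2 - be * v3) / s) (al / s) (- be / s)
              (- (be * v2 + al * v3) / s) (be / s) (al / s) = 1%:M.
    apply/matrixP => i j; rewrite mxE sum3 !mxE.
    have [->|[->|->]] := ord3 i; have [->|[->|->]] := ord3 j => /=;
     rewrite /s; field; done.
  by have [hu _] := mulmx1_unit h.
move=> x y; rewrite (col3E x) (col3E y) bracketE !mk3E bracketE.
apply: col3_eq; ring.
Qed.

Lemma eig2 (p q r : R) : 0 < p -> r ^+ 2 < p * q ->
  exists a' b' L, 1 <= L /\ 0 < a' ^+ 2 + b' ^+ 2 /\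
    p = a' ^+ 2 + L * b' ^+ 2 /\ q = b' ^+ 2 + L * a' ^+ 2 /\
    r = (1 - L) * a' * b'.
Proof.
move=> hp hpq.
have hq : 0 < q by have := sqr_ge0 r; nra.
set D := (p - q) ^+ 2 + 4 * r ^+ 2.
have hD : 0 <= D by rewrite /D; have := sqr_ge0 (p - q); have := sqr_ge0 r; lra.
set d := Num.sqrt D.
have hd0 : 0 <= d by exact: sqrtr_ge0.
have hd2 : d ^+ 2 = D by exact: sqr_sqrtr.
have hdlt : d < p + q by rewrite /D in hd2; nra.
set t := (p + q - d) / 2.
have ht : 0 < t by rewrite /t; lra.
have [d0|dpos] := eqVneq d 0.
  have h1 := sqr_ge0 (p - q); have h2 := sqr_ge0 r.
  rewrite /D d0 expr0n /= in hd2.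
  have hr : r = 0 by apply/eqP; rewrite -sqrf_eq0; apply/eqP; lra.
  have hpq' : p = q.
    by apply/eqP; rewrite -subr_eq0 -sqrf_eq0; apply/eqP; lra.
  exists (Num.sqrt p), 0, 1; rewrite sqr_sqrtr; last by lra.
  split; first by lra.
  split; first by nra.
  by rewrite hr hpq'; split; [|split]; ring.
have hdp : 0 < d by rewrite lt_def dpos hd0.
have hqt : 0 <= q - t by rewrite /t; rewrite /D in hd2; nra.
have hpt : 0 <= p - t by rewrite /t; rewrite /D in hd2; nra.
set X := t * (q - t) / d.
set Y := t * (p - t) / d.
have hX : 0 <= X by rewrite /X; apply: divr_ge0 => //; nra.
have hY : 0 <= Y by rewrite /Y; apply: divr_ge0 => //; nra.
have hqp : (q - t) * (p - t) = r ^+ 2.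
  have -> : (q - t) * (p - t) = (d ^+ 2 - (p - q) ^+ 2) / 4 by rewrite /t; field.
  by rewrite hd2 /D; field.
have hXY : X * Y = (t * r / d) ^+ 2.
  have -> : X * Y = t ^+ 2 * ((q - t) * (p - t)) / d ^+ 2.
    by rewrite /X /Y; field.
  by rewrite hqp; field.
have hab : Num.sqrt X * Num.sqrt Y = t / d * `|r|.
  rewrite -sqrtrM // hXY sqrtr_sqr normrM normrM normfV.
  by rewrite (ger0_norm (ltW ht)) (ger0_norm hd0) mulrAC.
have hL : (1 - (p + q + d) / (p + q - d)) = - d / t.
  by rewrite /t; field; lra.
have common : forall s : R, s ^+ 2 = 1 ->
   p = Num.sqrt X ^+ 2 + (p + q + d) / (p + q - d) * (s * Num.sqrt Y) ^+ 2 /\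
   q = (s * Num.sqrt Y) ^+ 2 + (p + q + d) / (p + q - d) * Num.sqrt X ^+ 2.
  move=> s hs; rewrite exprMn hs mul1r !sqr_sqrtr // /X /Y /t.
  split; field; lra.
exists (Num.sqrt X), ((if r < 0 then 1 else -1) * Num.sqrt Y),
       ((p + q + d) / (p + q - d)).
split; first by rewrite ler_pdivlMr; lra.
split.
  rewrite exprMn !sqr_sqrtr //.
  have -> : (if r < 0 then 1 else -1) ^+ 2 = 1 :> R by case: ifP => _; ring.
  have : X + Y = t by rewrite /X /Y /t; field.
  lra.
have [s2 [h1 h2]] : exists s : R, s = (if r < 0 then 1 else -1) /\ s ^+ 2 = 1.
  by exists (if r < 0 then 1 else -1); split => //; case: ifP => _; ring.
rewrite -h1; have [hp' hq'] := common _ h2; split => //; split => //.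
rewrite hL -mulrA (mulrCA _ s2) hab h1.
case: ltrP => hr.
  rewrite ltr0_norm //; field; lra.
rewrite ger0_norm //; field; lra.
Qed.


Lemma params (m00 m01 m02 m11 m12 m22 : R) :
  0 < m11 -> m12 ^+ 2 < m11 * m22 ->
  (forall x1 x2 : R, 0 < m00 + m11 * x1 ^+ 2 + m22 * x2 ^+ 2 + 2 * m01 * x1
                         + 2 * m02 * x2 + 2 * m12 * x1 * x2) ->
  exists k L al be v2 v3, 0 < k /\ 1 <= L /\ al ^+ 2 + be ^+ 2 != 0 /\
    m00 = k * (1 + v2 ^+ 2 + L * v3 ^+ 2) /\
    m01 = k * (v2 * al - L * v3 * be) /\
    m02 = k * (v2 * be + L * v3 * al) /\
    m11 = k * (al ^+ 2 + L * be ^+ 2) /\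
    m12 = k * (1 - L) * al * be /\
    m22 = k * (be ^+ 2 + L * al ^+ 2).
Proof.
move=> h11 h12 hQ.
have [a' [b' [L [hL1 [ht [e11 [e22 e12]]]]]]] := (@eig2 m11 m22 m12 h11 h12).
set t := a' ^+ 2 + b' ^+ 2 in ht e11 e22 e12 *.
have tn0 : t != 0 by rewrite gt_eqF.
have Ln0 : L != 0 by rewrite gt_eqF //; lra.
set c1 := a' * m01 + b' * m02.
set c2 := a' * m02 - b' * m01.
set K := m00 - c1 ^+ 2 / t ^+ 2 - c2 ^+ 2 / (t ^+ 2 * L).
have hK : 0 < K.
  set z1 := - c1 / t.
  set z2 := - c2 / (t * L).
  have := hQ ((a' * z1 - b' * z2) / t) ((b' * z1 + a' * z2) / t).
  suff -> : m00 + m11 * ((a' * z1 - b' * z2) / t) ^+ 2 +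
     m22 * ((b' * z1 + a' * z2) / t) ^+ 2 + 2 * m01 * ((a' * z1 - b' * z2) / t) +
     2 * m02 * ((b' * z1 + a' * z2) / t) +
     2 * m12 * ((a' * z1 - b' * z2) / t) * ((b' * z1 + a' * z2) / t) = K by [].
  rewrite e11 e22 e12 /K /z1 /z2 /c1 /c2 /t.
  field; rewrite -/t; apply/andP; split => //.
set sK := Num.sqrt K.
have hsK : sK ^+ 2 = K by rewrite sqr_sqrtr // ltW.
have sK0 : sK != 0 by rewrite gt_eqF // sqrtr_gt0.
set al := a' / sK. set be := b' / sK.
have hs : al ^+ 2 + be ^+ 2 = t / K by rewrite /al /be -hsK /t; field.
exists K, L, al, be, ((al * m01 + be * m02) / (K * (t / K))),
   ((al * m02 - be * m01) / (K * (t / K) * L)).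
split => //; split => //; split.
  by rewrite hs mulf_neq0 // invr_neq0 // gt_eqF.
have m00E : m00 = K + c1 ^+ 2 / t ^+ 2 + c2 ^+ 2 / (t ^+ 2 * L) by rewrite /K; ring.
rewrite m00E e11 e22 e12 -hsK /al /be /c1 /c2 /t.
split; first by field; rewrite -/t; apply/and3P.
split; first by field; rewrite -/t; apply/and3P.
split; first by field; rewrite -/t; apply/and3P.
split; first by field.
split; first by field.
by field.
Qed.


End B.
Arguments e0 {R}. Arguments e1 {R}. Arguments e2 {R}.

Theorem proposition3p10 (R : realType) (a : R) (ha : 0 <= a) :
  set_of_representatives a
    (fun h : 'M[R]_3 => exists lam : R, 1 <= lam /\ h = hU lam).
Proof.
split.
- move=> h [lam [hl ->]].
  have l0 : lam != 0 by rewrite gt_eqF //; lra.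
  have [hu hinv] := hU_inv l0.
  split => //.
  rewrite /is_inner_product /gl_act hinv.
  have hHi : mk3 1 0 0 0 1 0 0 0 lam \in unitmx by rewrite -hinv unitmx_inv.
  split; first by move=> c x y z; rewrite mulmxDr -scalemxAr !ip0E !mxE; ring.
  split; first by move=> x y; rewrite !ip0E; ring.
  move=> x hx; apply: ip0_pos; apply: contraNneq hx => e.
  by rewrite -(mulKmx hHi x) e mulmx0.
- move=> B hB.
  have [_ [_ hp]] := hB.
  have h11 : 0 < B e1 e1 by apply: hp; apply: col3_neq0; rewrite oner_neq0 ?orbT.
  have h12 : B e1 e2 ^+ 2 < B e1 e1 * B e2 e2.
    have hx : col3 0 (B e1 e2) (- B e1 e1) != 0.
      by apply: col3_neq0; rewrite oppr_eq0 (gt_eqF h11) ?orbT.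
    have := hp _ hx; rewrite (ip_exp hB) !col3_0 !col3_1 !col3_2 => h.
    nra.
  have hQ : forall x1 x2 : R, 0 < B e0 e0 + B e1 e1 * x1 ^+ 2 + B e2 e2 * x2 ^+ 2
      + 2 * B e0 e1 * x1 + 2 * B e0 e2 * x2 + 2 * B e1 e2 * x1 * x2.
    move=> x1 x2.
    have hx : col3 1 x1 x2 != 0 by apply: col3_neq0; rewrite oner_neq0.
    have := hp _ hx; rewrite (ip_exp hB) !col3_0 !col3_1 !col3_2 => h.
    by move: h; congr (0 < _); ring.
  have [k [L [al [be [v2 [v3 [hk [hL [hs [E00 [E01 [E02 [E11 [E12 E22]]]]]]]]]]]]]] :=
    params h11 h12 hQ.
  have hL0 : 0 <= L by lra.
  have l1 : 1 <= Num.sqrt L by rewrite -sqrtr1 ler_wsqrtr.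
  have l0 : Num.sqrt L != 0 by rewrite gt_eqF //; lra.
  have hl2 : Num.sqrt L ^+ 2 = L by rewrite sqr_sqrtr.
  exists (hU (Num.sqrt L)); split; first by exists (Num.sqrt L).
  exists k; split => //; exists (mk3 1 0 0 v2 al be v3 (- be) al).
  split; first exact: F_aut.
  move=> x y; have [_ hinv] := hU_inv l0.
  rewrite /gl_act hinv !mk3E' ip0E !col3_0 !col3_1 !col3_2 (ip_exp hB).
  rewrite E00 E01 E02 E11 E12 E22.
  set s := Num.sqrt L in hl2 *.
  rewrite -hl2; ring.
Qed.
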